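(* For every instance with the dual metric loss, there exists a clustering in the $3$-core.
   Context: An instance with dual metric loss consists of a finite nonempty set $\mathcal{N}$ of $n$ agents, a finite nonempty set $\mathcal{M}$ of feasible centers, a positive integer $k$, a pseudometric $d^m$ on $\mathcal{N}$ (non-centroid metric), and a pseudometric $d^c$ on $\mathcal{N}\cup\mathcal{M}$ (centroid metric; only its values on $\mathcal{N}\times\mathcal{M}$ enter the losses). The loss of agent $i$ in a pair $(C,x)$ with $i\in C\subseteq\mathcal{N}$, $x\in\mathcal{M}$ is $\ell_i(C,x)=\max_{j\in C}d^m(i,j)+d^c(i,x)$. A clustering is $\mathcal{X}=\{(C_1,x_1),\dots,(C_k,x_k)\}$ with $C_1,\dots,C_k$ pairwise disjoint subsets of $\mathcal{N}$ (some possibly empty) with union $\mathcal{N}$ and $x_t\in\mathcal{M}$; $\ell_i(\mathcal{X})=\ell_i(C_t,x_t)$ for the unique $t$ with $i\in C_t$. For $\alpha\ge1$, $\mathcal{X}$ is in the $\alpha$-core if there is no $S\subseteq\mathcal{N}$ with $|S|\ge n/k$ and $y\in\mathcal{M}$ such that $\alpha\cdot\ell_i(S,y)<\ell_i(\mathcal{X})$ for all $i\in S$. *)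

(* Defs.v *)
From mathcomp Require Import all_boot all_order all_algebra.
Set Implicit Arguments. Unset Strict Implicit. Unset Printing Implicit Defensive.
Import Order.TTheory GRing.Theory Num.Theory.
Local Open Scope ring_scope.

Definition pseudometric (R : realFieldType) (T : Type) (d : T -> T -> R) : Prop :=
  [/\ forall x, d x x = 0,
      forall x y, d x y = d y x &
      forall x y z, d x z <= d x y + d y z].

Definition loss (R : realFieldType) (N M : finType)
  (dm : N -> N -> R) (dc : N + M -> N + M -> R)
  (i : N) (C : {set N}) (x : M) : R :=
  \big[Num.max/0]_(j in C) dm i j + dc (inl i) (inr x).

Definition is_clustering (N : finType) (k : nat) (C : 'I_k -> {set N}) : Prop :=
  (forall t t' : 'I_k, t != t' -> [disjoint C t & C t']) /\
  (forall i : N, exists t : 'I_k, i \in C t).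

Definition in_core (R : realFieldType) (N M : finType)
  (dm : N -> N -> R) (dc : N + M -> N + M -> R) (k : nat) (alpha : R)
  (C : 'I_k -> {set N}) (x : 'I_k -> M) : Prop :=
  ~ (exists (S : {set N}) (y : M),
        ((#|N|%:R / k%:R : R) <= #|S|%:R) /\
        (forall i, i \in S ->
           forall t : 'I_k, i \in C t ->
             alpha * loss dm dc i S y < loss dm dc i (C t) (x t))).

(* Main.v *)
Require Import Defs.
From mathcomp Require Import all_boot all_order all_algebra.
From mathcomp Require Import lra.
Import Order.TTheory GRing.Theory Num.Theory.
Local Open Scope ring_scope.
Set Implicit Arguments. Unset Strict Implicit. Unset Printing Implicit Defensive.

Definition Dm (R : realFieldType) (N : finType) (dm : N -> N -> R)
  (i : N) (A : {set N}) : R := \big[Num.max/0]_(j in A) dm i j.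

Definition lamb (R : realFieldType) (N M : finType)
  (dm : N -> N -> R) (dc : N + M -> N + M -> R) (S : {set N}) (y : M) : R :=
  \big[Num.max/0]_(s in S) loss dm dc s S y.

Lemma lossE (R : realFieldType) (N M : finType)
  (dm : N -> N -> R) (dc : N + M -> N + M -> R) i A y :
  loss dm dc i A y = Dm dm i A + dc (inl i) (inr y).
Proof. by []. Qed.

Lemma pm_ge0 (R : realFieldType) (T : Type) (d : T -> T -> R) :
  pseudometric d -> forall x y, 0 <= d x y.
Proof.
case=> h0 hs ht x y; have := ht x y x; rewrite h0 (hs y x) => h; lra.
Qed.

Lemma Dm_ge0 (R : realFieldType) (N : finType) (dm : N -> N -> R) i A :
  (forall a b, 0 <= dm a b) -> 0 <= Dm dm i A.
Proof. move=> h; by apply: (big_ind (fun v => 0 <= v)) => // a b ha hb; rewrite le_max ha. Qed.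

Lemma Dm_le (R : realFieldType) (N : finType) (dm : N -> N -> R) i (A : {set N}) j :
  j \in A -> dm i j <= Dm dm i A.
Proof. by move=> hj; rewrite /Dm; apply: (le_bigmax_cond _ _ hj). Qed.

Lemma ex_argmin (R : realFieldType) (T : finType) (P : pred T) (F : T -> R) :
  (exists t, P t) -> exists t, P t /\ forall u, P u -> F t <= F u.
Proof.
case=> t0 Pt0; case: (arg_minP F Pt0) => t Pt H; by exists t.
Qed.

Lemma greedy (R : realFieldType) (N M : finType)
  (dm : N -> N -> R) (dc : N + M -> N + M -> R) (q : R) (x0 : M) :
  0 < q -> forall (m : nat) (A : {set N}), #|A|%:R <= m%:R * q ->
  exists (C : nat -> {set N}) (x : nat -> M) (lam : nat -> R) (g : nat -> bool),
  [/\ (forall j, j \in A -> exists t, (t < m)%N /\ j \in C t),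
      (forall t, g t -> forall j, j \in C t -> loss dm dc j (C t) (x t) <= lam t) &
      (forall (S : {set N}) (y : M), S \subset A -> q <= #|S|%:R ->
         exists t, [/\ (t < m)%N, g t, lam t <= lamb dm dc S y &
                       exists2 i, i \in S & i \in C t])].
Proof.
move=> qpos; elim=> [|m IH] A hA.
  have A0 : #|A| = 0%N.
    by apply/eqP; rewrite -(@pnatr_eq0 R) eq_le ler0n andbT; rewrite mul0r in hA.
  exists (fun _ => set0), (fun _ => x0), (fun _ => 0), (fun _ => false); split => //.
  - by move=> j hj; move/eqP: A0; rewrite cards_eq0 => /eqP A0; rewrite A0 inE in hj.
  - move=> S y hS hq; exfalso.
    have : (#|S| <= #|A|)%N by apply: subset_leq_card.
    rewrite A0 leqn0 => /eqP S0; rewrite S0 in hq; lra.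
case: (boolP [exists S : {set N}, (S \subset A) && (q <= #|S|%:R)]) => hex; last first.
  exists (fun _ => A), (fun _ => x0), (fun _ => 0), (fun _ => false); split => //.
  - by move=> j hj; exists 0%N.
  - move=> S y hS hq; exfalso; move/negP: hex; apply; apply/existsP; exists S.
    by rewrite hS hq.
case/existsP: hex => S0 /andP [hS0 hqS0].
have [[C0 y0] [/andP [hC0 hq0] hmin]] :=
  @ex_argmin R _ (fun p : {set N} * M => (p.1 \subset A) && (q <= #|p.1|%:R))
    (fun p => lamb dm dc p.1 p.2) (ex_intro _ (S0, x0) (introT andP (conj hS0 hqS0))).
simpl in hC0, hq0.
set A' := A :\: C0.
have hA' : #|A'|%:R <= m%:R * q.
  have e : (#|A :&: C0| + #|A'|)%N = #|A| by rewrite cardsID.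
  have e2 : A :&: C0 = C0 by apply/setIidPr.
  rewrite e2 in e.
  have : (#|C0|%:R + #|A'|%:R : R) = #|A|%:R by rewrite -natrD e.
  move: hA; rewrite -addn1 natrD mulrDl mul1r => hA he; lra.
have [C' [x' [lam' [g' [hcov hc he]]]]] := IH A' hA'.
exists (fun t => if t is t'.+1 then C' t' else C0),
       (fun t => if t is t'.+1 then x' t' else y0),
       (fun t => if t is t'.+1 then lam' t' else lamb dm dc C0 y0),
       (fun t => if t is t'.+1 then g' t' else true); split.
- move=> j hj; case: (boolP (j \in C0)) => hjC.
    by exists 0%N.
  have hjA' : j \in A' by rewrite inE hjC hj.
  by have [t [ht hjt]] := hcov j hjA'; exists t.+1.
- case=> [|t] /= gt j hj; last exact: hc.
  rewrite /lamb; exact: (le_bigmax_cond _ (fun s => loss dm dc s C0 y0) hj).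
- move=> S y hS hq.
  case: (boolP [exists i, (i \in S) && (i \in C0)]) => hi.
    case/existsP: hi => i /andP [hiS hiC].
    exists 0%N; split => //.
      by apply: (hmin (S, y)); rewrite /= hS hq.
    by exists i.
  have hS' : S \subset A'.
    apply/subsetP => i hiS; rewrite inE (subsetP hS i hiS) andbT.
    apply/negP => hiC; move/negP: hi; apply; apply/existsP; exists i; by rewrite hiS hiC.
  have [t [ht gt hl [i hiS hiC]]] := he S y hS' hq.
  exists t.+1; split => //; by exists i.
Qed.

Theorem mainTheorem3 (R : realFieldType) (N M : finType) (k : nat)
  (dm : N -> N -> R) (dc : N + M -> N + M -> R) :
  (0 < #|N|)%N -> (0 < #|M|)%N -> (0 < k)%N ->
  pseudometric dm -> pseudometric dc ->
  exists (C : 'I_k -> {set N}) (x : 'I_k -> M),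
    is_clustering C /\ in_core dm dc 3 C x.
Proof.
move=> hn hM hk hdm hdc.
case/card_gt0P: hM => x0 _.
have dm0 := pm_ge0 hdm.
have dc0 := pm_ge0 hdc.
have [_ dms _] := hdm.
have [_ dcs dct] := hdc.
set q : R := #|N|%:R / k%:R.
have k0 : k%:R != 0 :> R by rewrite pnatr_eq0 -lt0n.
have qpos : 0 < q by rewrite divr_gt0 // ltr0n.
have hsz : #|[set: N]|%:R <= k%:R * q.
  by rewrite cardsT /q mulrC divfK.
have [C [x [lam [g [hcov hc he]]]]] := greedy dm dc x0 qpos hsz.
pose allowed (l : N) (t : 'I_k) (i : N) : bool :=
  [&& g t, i \in C t & 2 * dm l i <= lam t].
pose W (l : N) (t : 'I_k) (i : N) : R :=
  dm l i + Dm dm i (C t) + lam t / 2 + dc (inl l) (inr (x t)).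
have hQ : forall l, exists t : 'I_k,
    (exists i, allowed l t i /\ forall t' i', allowed l t' i' -> W l t i <= W l t' i')
    \/ ((forall t' i', ~~ allowed l t' i') /\ l \in C t).
  move=> l.
  case: (boolP [exists p : 'I_k * N, allowed l p.1 p.2]) => hex.
    case/existsP: hex => p0 hp0.
    have [[t i] [hti hmin]] := @ex_argmin R _ (fun p : 'I_k * N => allowed l p.1 p.2)
       (fun p => W l p.1 p.2) (ex_intro _ p0 hp0).
    exists t; left; exists i; split => // t' i' h; exact: (hmin (t', i')).
  have [t [ht hlt]] := hcov l (in_setT l).
  exists (Ordinal ht); right; split => // t' i'.
  apply/negP => h; move/negP: hex; apply; apply/existsP; by exists (t', i').
have [f hf] := fin_all_exists hQ.
pose Cf (t : 'I_k) := [set l | f l == t].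
have bound : forall l t i, allowed l t i ->
    loss dm dc l (Cf (f l)) (x (f l)) <= W l t i.
  move=> l t i hal.
  case: (hf l) => [[i0 [hal0 hmin0]] | [hno _]]; last by move: (hno t i); rewrite hal.
  apply: le_trans (hmin0 t i hal).
  move: hal0; rewrite /allowed => /and3P [g0 hi0 hd0].
  rewrite lossE /W; rewrite lerD2r.
  have lam0 : 0 <= lam (f l) by have := dm0 l i0; lra.
  rewrite [Dm dm l _]/Dm; apply: bigmax_le.
    have := dm0 l i0; have := Dm_ge0 i0 (C (f l)) dm0; lra.
  move=> m; rewrite inE => /eqP hm.
  case: (hf m) => [[im [halm _]] | [hno hmC]].
    move: halm; rewrite /allowed hm => /and3P [_ him hdm'].
    have t1 := dct (inl l) (inl i0) (inl m).
    have h1 : dm l m <= dm l i0 + dm i0 m.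
      case: hdm => _ _ htr; exact: htr.
    have h2 : dm i0 m <= dm i0 im + dm im m.
      case: hdm => _ _ htr; exact: htr.
    have h3 := Dm_le dm i0 him.
    rewrite (dms im m) in h2.
    lra.
  have [hd00 _ _] := hdm.
  exfalso; move/negP: (hno (f l) m); apply.
  rewrite /allowed g0 /= -{1}hm hmC /= hd00 mulr0; exact: lam0.
exists Cf, (fun t => x t); split.
  split.
    move=> t tt htt; apply/pred0P => l /=; rewrite !inE; apply/negP => /andP [/eqP h1 /eqP h2].
    by move/eqP: htt; apply; rewrite -h1 -h2.
  by move=> i; exists (f i); rewrite inE.
case=> S [y [hqS hblock]].
have [t [ht gt hlam [i hiS hiC]]] := he S y (subsetT S) hqS.
set T : 'I_k := Ordinal ht.
have [hd00 _ htr] := hdm.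
have h1 : loss dm dc i (C t) (x t) <= lam t := hc t gt i hiC.
have lam0 : 0 <= lam t.
  by apply: le_trans h1; rewrite lossE; have := dc0 (inl i) (inr (x t)); have := Dm_ge0 i (C t) dm0; lra.
have ali : allowed i T i by rewrite /allowed /= gt hiC hd00 mulr0.
have bi := bound i T i ali.
have bli : 3 * loss dm dc i S y < loss dm dc i (Cf (f i)) (x (f i)) by apply: hblock => //; rewrite inE.
have [s [hsS hsmax]] := @ex_argmin R N (fun s => s \in S) (fun s => - loss dm dc s S y) (ex_intro _ i hiS).
have hL : lamb dm dc S y <= loss dm dc s S y.
  apply: bigmax_le.
    by rewrite lossE; have := dc0 (inl s) (inr y); have := Dm_ge0 s S dm0; lra.
  move=> u hu; have := hsmax u hu; lra.
have hsi : dm s i <= Dm dm i S by rewrite dms; exact: Dm_le.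
move: bi bli h1; rewrite /W !lossE /= hd00 => bi bli h1.
have ci0 := dc0 (inl i) (inr y).
have als : allowed s T i.
  rewrite /allowed /= gt hiC /=; lra.
have bs := bound s T i als.
have bls : 3 * loss dm dc s S y < loss dm dc s (Cf (f s)) (x (f s)) by apply: hblock => //; rewrite inE.
move: bs bls hL; rewrite /W !lossE /= => bs bls hL.
have tr1 := dct (inl s) (inr y) (inr (x t)).
have tr2 := dct (inr y) (inl i) (inr (x t)).
have sy := dcs (inr y) (inl i).
have Ds0 := Dm_ge0 s S dm0.
lra.
Qed.
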